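(* Let $A$ be a partial magma and $R$ an equivalence relation on $A$ in the category of partial magmas. Then $R$ is effective if and only if it is additive.
   Context: A partial magma is a set $A$ with a distinguished element $0$, a subset $A_2\subseteq A\times A$ of summable pairs and a map $+\colon A_2\to A$, such that $(0,a),(a,0)\in A_2$ and $a+0=0+a=a$ for all $a$, and $(a,b)\in A_2$ implies $(b,a)\in A_2$ and $a+b=b+a$. A homomorphism of partial magmas is a map $f$ with $f(0)=0$, $(f(a_1),f(a_2))\in B_2$ and $f(a_1+a_2)=f(a_1)+f(a_2)$ for $(a_1,a_2)\in A_2$. The product $A\times A$ is the partial magma in which $((a,b),(c,d))$ is summable iff $(a,c)\in A_2$ and $(b,d)\in A_2$, with componentwise sum. A partial submagma of a partial magma $C$ is a subset $D\ni 0$ with a set $D_2\subseteq C_2\cap(D\times D)$ containing all $(0,d),(d,0)$, closed under swapping, such that sums of pairs in $D_2$ lie in $D$. An equivalence relation on $A$ is a partial submagma $R$ of $A\times A$ such that for every partial magma $X$, the set of homomorphisms $X\to R$ is an equivalence relation on the set of homomorphisms $X\to A$ (via $\mathrm{Hom}(X,R)\subseteq \mathrm{Hom}(X,A)\times\mathrm{Hom}(X,A)$). $R$ is effective if there is a homomorphism $f\colon A\to B$ of partial magmas such that $R\rightrightarrows A$ is its kernel pair, i.e. $R=\{(a,a'):f(a)=f(a')\}$ and $R_2$ consists of all pairs of elements of $R$ that are summable in $A\times A$. $R$ is additive if $R_2=(R\times R)\cap(A\times A)_2$. *)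

(* Defs.v *)
(** The sum is encoded as a total function [padd] whose values are only
    constrained (and only ever used) on summable pairs. *)
Record pmagma := PMagma {
  car :> Type;
  pzero : car;
  psumm : car -> car -> Prop;
  padd : car -> car -> car;
  psumm0l : forall a, psumm pzero a;
  psumm0r : forall a, psumm a pzero;
  padd0l : forall a, padd pzero a = a;
  padd0r : forall a, padd a pzero = a;
  psummC : forall a b, psumm a b -> psumm b a;
  paddC : forall a b, psumm a b -> padd a b = padd b a
}.

Arguments pzero {_}.
Arguments psumm {_} _ _.
Arguments padd {_} _ _.

Definition is_hom (A B : pmagma) (f : A -> B) : Prop :=
  f pzero = pzero /\
  forall a1 a2, psumm a1 a2 ->
    psumm (f a1) (f a2) /\ f (padd a1 a2) = padd (f a1) (f a2).

Definition prod_summ (A : pmagma) (p q : A * A) : Prop :=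
  psumm (fst p) (fst q) /\ psumm (snd p) (snd q).
Definition prod_add (A : pmagma) (p q : A * A) : A * A :=
  (padd (fst p) (fst q), padd (snd p) (snd q)).
Definition prod_zero (A : pmagma) : A * A := (pzero, pzero).

Record psubmagma2 (A : pmagma) := PSub {
  rel : A * A -> Prop;
  rel2 : A * A -> A * A -> Prop;
  rel_zero : rel (prod_zero A);
  rel2_sub : forall p q, rel2 p q -> prod_summ A p q /\ rel p /\ rel q;
  rel2_zero : forall d, rel d -> rel2 (prod_zero A) d /\ rel2 d (prod_zero A);
  rel2_sym : forall p q, rel2 p q -> rel2 q p;
  rel2_add : forall p q, rel2 p q -> rel (prod_add A p q)
}.

Arguments rel {_} _ _.
Arguments rel2 {_} _ _ _.

Definition is_hom_sub (X A : pmagma) (R : psubmagma2 A) (g : X -> A * A) : Prop :=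
  g pzero = prod_zero A /\
  (forall x, rel R (g x)) /\
  forall x1 x2, psumm x1 x2 ->
    rel2 R (g x1) (g x2) /\ g (padd x1 x2) = prod_add A (g x1) (g x2).

(** The relation on Hom(X, A) induced by Hom(X, R) ⊆ Hom(X,A) x Hom(X,A). *)
Definition hom_rel (X A : pmagma) (R : psubmagma2 A) (f1 f2 : X -> A) : Prop :=
  is_hom_sub X A R (fun x => (f1 x, f2 x)).

Definition is_equiv_rel (A : pmagma) (R : psubmagma2 A) : Prop :=
  forall X : pmagma,
    (forall f, is_hom X A f -> hom_rel X A R f f) /\
    (forall f1 f2, is_hom X A f1 -> is_hom X A f2 ->
        hom_rel X A R f1 f2 -> hom_rel X A R f2 f1) /\
    (forall f1 f2 f3, is_hom X A f1 -> is_hom X A f2 -> is_hom X A f3 ->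
        hom_rel X A R f1 f2 -> hom_rel X A R f2 f3 -> hom_rel X A R f1 f3).

Definition effective (A : pmagma) (R : psubmagma2 A) : Prop :=
  exists (B : pmagma) (f : A -> B),
    is_hom A B f /\
    (forall a a', rel R (a, a') <-> f a = f a') /\
    (forall p q, rel2 R p q <-> (rel R p /\ rel R q /\ prod_summ A p q)).

Definition additive (A : pmagma) (R : psubmagma2 A) : Prop :=
  forall p q, rel2 R p q <-> (rel R p /\ rel R q /\ prod_summ A p q).

(* Main.v *)
Require Import Defs.
From Stdlib Require Import ClassicalEpsilon FunctionalExtensionality PropExtensionality.

(* test object: {0, x} with only trivial sums *)
Definition bpm : pmagma.
Proof.
  refine (PMagma bool false (fun u v => u = false \/ v = false) orb _ _ _ _ _ _).
  - intros; left; reflexivity.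
  - intros; right; reflexivity.
  - intros; reflexivity.
  - intros [|]; reflexivity.
  - intros a b [H|H]; [right|left]; exact H.
  - intros [|] [|] _; reflexivity.
Defined.

Definition pt (A : pmagma) (a : A) : bpm -> A := fun b : bool => if b then a else pzero.

Lemma pt_hom (A : pmagma) (a : A) : is_hom bpm A (pt A a).
Proof.
  split; [reflexivity|].
  intros [|] [|] H; simpl in *.
  - destruct H as [H|H]; discriminate.
  - split; [apply psumm0r | symmetry; apply padd0r].
  - split; [apply psumm0l | symmetry; apply padd0l].
  - split; [apply psumm0l | symmetry; apply padd0l].
Qed.

Lemma pt_rel (A : pmagma) (R : psubmagma2 A) a a' :
  rel R (a, a') -> hom_rel bpm A R (pt A a) (pt A a').
Proof.
  intro H. unfold hom_rel, is_hom_sub. split; [reflexivity|]. split.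
  - intros [|]; simpl; [exact H | apply rel_zero].
  - intros [|] [|] Hs; simpl in *.
    + destruct Hs as [Hs|Hs]; discriminate.
    + split; [apply rel2_zero; exact H|].
      unfold prod_add; simpl; rewrite !padd0r; reflexivity.
    + split; [apply rel2_zero; exact H|].
      unfold prod_add; simpl; rewrite !padd0l; reflexivity.
    + split; [apply rel2_zero; apply rel_zero|].
      unfold prod_add; simpl; rewrite !padd0l; reflexivity.
Qed.

Lemma rel_pt (A : pmagma) (R : psubmagma2 A) a a' :
  hom_rel bpm A R (pt A a) (pt A a') -> rel R (a, a').
Proof. intros [_ [H _]]. exact (H true). Qed.

Section Q.
Variable A : pmagma.
Variable R : psubmagma2 A.

Definition cls (a : A) : A -> Prop := fun b => rel R (a, b).
Definition Sm (c d : A -> Prop) : Prop :=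
  exists a b, c = cls a /\ d = cls b /\ psumm a b.
Definition Bsumm (c d : A -> Prop) : Prop :=
  Sm c d \/ c = cls pzero \/ d = cls pzero.
Definition Badd (c d : A -> Prop) : A -> Prop :=
  match excluded_middle_informative (Sm c d) with
  | left H =>
      let (a, Ha) := constructive_indefinite_description _ H in
      let (b, _) := constructive_indefinite_description _ Ha in
      cls (padd a b)
  | right _ => if excluded_middle_informative (c = cls pzero) then d else c
  end.

Hypothesis Hrefl : forall a, rel R (a, a).
Hypothesis Hsym : forall a b, rel R (a, b) -> rel R (b, a).
Hypothesis Htrans : forall a b c, rel R (a, b) -> rel R (b, c) -> rel R (a, c).
Hypothesis Hadd : additive A R.

Lemma cls_eq a a' : cls a = cls a' <-> rel R (a, a').
Proof.
  split.
  - intro H. assert (cls a' a') by apply Hrefl. rewrite <- H in H0. exact H0.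
  - intro H. apply functional_extensionality; intro b; apply propositional_extensionality.
    unfold cls; split; intro H'; eauto.
Qed.

Lemma W a a' b b' : rel R (a, a') -> rel R (b, b') -> psumm a b -> psumm a' b' ->
  rel R (padd a b, padd a' b').
Proof.
  intros. apply (rel2_add _ R (a, a') (b, b')). apply Hadd.
  repeat split; assumption.
Qed.

Lemma Badd_spec a b : psumm a b -> Badd (cls a) (cls b) = cls (padd a b).
Proof.
  intro Hs. unfold Badd.
  destruct (excluded_middle_informative _) as [H|H].
  - destruct (constructive_indefinite_description _ H) as [a0 Ha0].
    destruct (constructive_indefinite_description _ Ha0) as [b0 [E1 [E2 Hs0]]].
    apply cls_eq in E1. apply cls_eq in E2. apply cls_eq.
    apply Hsym; apply W; auto.
  - exfalso; apply H; exists a, b; auto.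
Qed.

Lemma Badd0l d : Badd (cls pzero) d = d.
Proof.
  destruct (classic (Sm (cls pzero) d)) as [[a [b [E1 [E2 Hs]]]]|H].
  - subst d. rewrite Badd_spec by apply psumm0l.
    rewrite padd0l. reflexivity.
  - unfold Badd. destruct (excluded_middle_informative _) as [H'|H']; [contradiction|].
    destruct (excluded_middle_informative _) as [_|n]; [reflexivity|].
    exfalso; apply n; reflexivity.
Qed.

Lemma Badd0r c : Badd c (cls pzero) = c.
Proof.
  destruct (classic (Sm c (cls pzero))) as [[a [b [E1 [E2 Hs]]]]|H].
  - subst c. rewrite Badd_spec by apply psumm0r.
    rewrite padd0r. reflexivity.
  - unfold Badd. destruct (excluded_middle_informative _) as [H'|H']; [contradiction|].
    destruct (excluded_middle_informative _) as [e|_]; [symmetry; exact e|reflexivity].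
Qed.

Definition Bpm : pmagma.
Proof.
  refine (PMagma (A -> Prop) (cls pzero) Bsumm Badd _ _ Badd0l Badd0r _ _).
  - intros; right; left; reflexivity.
  - intros; right; right; reflexivity.
  - intros c d [[a [b [E1 [E2 Hs]]]]|[H|H]].
    + left; exists b, a; repeat split; auto. apply psummC; exact Hs.
    + right; right; exact H.
    + right; left; exact H.
  - intros c d [[a [b [E1 [E2 Hs]]]]|[H|H]].
    + subst. rewrite !Badd_spec; auto using psummC. rewrite paddC; auto.
    + subst. rewrite Badd0l, Badd0r; reflexivity.
    + subst. rewrite Badd0l, Badd0r; reflexivity.
Defined.

Lemma Bpm_effective : effective A R.
Proof.
  exists Bpm, cls. split; [|split].
  - split; [reflexivity|]. intros a1 a2 Hs. split.
    + left; exists a1, a2; auto.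
    + simpl. symmetry; apply Badd_spec; exact Hs.
  - intros a a'; simpl; split; intro H; apply cls_eq; auto.
  - exact Hadd.
Qed.
End Q.

Theorem mainTheorem4 (A : pmagma) (R : psubmagma2 A) :
  is_equiv_rel A R -> (effective A R <-> additive A R).
Proof.
  intro HE. split.
  - intros [B [f [_ [_ H]]]]. exact H.
  - intro Hadd.
    assert (Hrefl : forall a, rel R (a, a)).
    { intro a. destruct (HE bpm) as [H _].
      apply rel_pt, H, pt_hom. }
    assert (Hsym : forall a b, rel R (a, b) -> rel R (b, a)).
    { intros a b Hab. destruct (HE bpm) as [_ [H _]].
      apply rel_pt, H; auto using pt_hom, pt_rel. }
    assert (Htrans : forall a b c, rel R (a, b) -> rel R (b, c) -> rel R (a, c)).
    { intros a b c H1 H2. destruct (HE bpm) as [_ [_ H]].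
      apply rel_pt. apply (H _ (pt A b)); auto using pt_hom, pt_rel. }
    apply Bpm_effective; assumption.
Qed.
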